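(* Let $r\ge2$. If $\ell\in\mathcal M^1(\mathcal R_r)$ satisfies $\ell^r\ge\log 3$, then $\min\{\ell^i: i\in[r-1]\}\le\log(4r-5)$.
   Context: $\mathcal R_r$ is the rose with one vertex and $r$ loop edges identified with $[r]=\{1,\dots,r\}$; a length function is $\ell=(\ell^1,\dots,\ell^r)\in\mathbb R^r_{>0}$. The entropy is $\mathfrak h_{\mathcal R_r}(\ell)=\lim_{t\to\infty}\frac1t\log\#\{\gamma:\ell(\gamma)\le t\}$ over based circuits $\gamma$ (cyclically reduced closed edge paths in the oriented petals), and $\mathcal M^1(\mathcal R_r)=\{\ell:\mathfrak h_{\mathcal R_r}(\ell)=1\}$. *)

(* Defs.v *)
From HB Require Import structures.
From mathcomp Require Import all_boot all_order all_algebra.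
From mathcomp Require Import all_classical all_reals all_analysis.
Set Implicit Arguments. Unset Strict Implicit. Unset Printing Implicit Defensive.
Import Order.TTheory GRing.Theory Num.Theory numFieldNormedType.Exports.
Local Open Scope classical_set_scope.
Local Open Scope ring_scope.

(* Oriented petals of the rose R_r: a letter is a petal index together with
   an orientation (true = positive, false = reversed). *)
Definition letter (r : nat) : finType := ('I_r * bool)%type.

Definition linv (r : nat) (a : letter r) : letter r := (a.1, ~~ a.2).

(* Cyclically reduced closed edge path: consecutive letters (cyclically,
   last followed by first) are never mutually inverse. *)
Definition cyc_reduced (r : nat) (s : seq (letter r)) : bool :=
  all (fun p => p.2 != linv p.1) (zip s (rot 1 s)).

Definition wlen (R : realType) (r : nat) (l : 'I_r -> R) (s : seq (letter r)) : R :=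
  \sum_(a <- s) l a.1.

(* Number of based circuits of (combinatorial) length n with l-length <= t. *)
Definition circ_count_n (R : realType) (r : nat) (l : 'I_r -> R) (t : R) (n : nat) : nat :=
  #|[set w : n.-tuple (letter r) | cyc_reduced w && (wlen l w <= t)]|.

Definition lmin (R : realType) (r : nat) (l : 'I_r -> R) : R :=
  \big[Num.min/1]_(i < r) l i.

(* Any circuit with l-length <= t has at most t / lmin l edges, so the
   following finite sum counts ALL based circuits gamma (nonempty) with
   l(gamma) <= t. *)
Definition circ_count (R : realType) (r : nat) (l : 'I_r -> R) (t : R) : nat :=
  \sum_(1 <= n < (Num.truncn (t / lmin l)).+2) circ_count_n l t n.

(* l lies in M^1(R_r): the entropy lim_{t->oo} (1/t) log #{gamma : l(gamma) <= t}
   exists and equals 1. *)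
Definition entropy_one (R : realType) (r : nat) (l : 'I_r -> R) : Prop :=
  (fun t : R => ln ((circ_count l t)%:R) / t) @ +oo%R --> (1 : R).

(* Main.v *)
Require Import Defs.
From HB Require Import structures.
From mathcomp Require Import all_boot all_order all_algebra.
From mathcomp Require Import all_classical all_reals all_analysis.
From mathcomp Require Import ring lra.
Import Order.TTheory GRing.Theory Num.Theory numFieldNormedType.Exports.
Set Implicit Arguments. Unset Strict Implicit.
Local Open Scope ring_scope.

Definition redrel r : rel (letter r) := fun a b => b != linv a.
Definition linred r (s : seq (letter r)) := sorted (@redrel r) s.

Lemma cyc_path r (x z : letter r) p :
  all (fun q => q.2 != linv q.1) (zip (x::p) (rcons p z)) -> path (@redrel r) x p.
Proof. elim: p x => [|y p IH] x //= /andP[h1 h2]. rewrite /redrel h1 /=. exact: IH. Qed.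

Lemma cyc_lin r (s : seq (letter r)) : cyc_reduced s -> linred s.
Proof. case: s => [|x p] //. rewrite /cyc_reduced rot1_cons. exact: cyc_path. Qed.

Fixpoint allw r n : seq (seq (letter r)) :=
  if n is n'.+1 then [seq rcons w a | w <- allw r n', a <- enum (letter r)]
  else [:: [::]].

Lemma allw_mem r n w : (w \in allw r n) = (size w == n).
Proof.
elim: n w => [|n IH] w /=.
  by rewrite inE; case: w.
apply/allpairsP/idP.
  by case=> [[w' a]] /= [h1 _ ->]; rewrite size_rcons eqSS -IH.
case/lastP: w => [|w a] //; rewrite size_rcons eqSS => h.
by exists (w, a); rewrite /= IH h mem_enum.
Qed.

Lemma allw_uniq r n : uniq (allw r n).
Proof.
elim: n => [|n IH] //=.
apply: allpairs_uniq => //; first exact: enum_uniq.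
by move=> [w a] [w' a'] _ _ /= /rcons_inj.
Qed.

Lemma sum_tuple (R : realType) r n (G : seq (letter r) -> R) :
  \sum_(t : n.-tuple (letter r)) G t = \sum_(w <- allw r n) G w.
Proof.
rewrite -(big_map val xpredT G); apply: perm_big; apply: uniq_perm.
- by rewrite map_inj_uniq ?index_enum_uniq //; exact: val_inj.
- exact: allw_uniq.
move=> w; rewrite allw_mem; apply/mapP/idP.
  by case=> t _ ->; rewrite size_tuple.
move=> h; exists (Tuple h) => //; exact: mem_index_enum.
Qed.

Definition wt (R : realType) r (y : 'I_r -> R) (w : seq (letter r)) : R :=
  (linred w)%:R * \prod_(a <- w) y a.1.
Definition cf (R : realType) r (y : 'I_r -> R) (a : letter r) : R := (1 + y a.1)^-1.

Lemma wt_rcons (R : realType) r (y : 'I_r -> R) x p a :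
  wt y (rcons (x::p) a) = wt y (x::p) * (y a.1 * (a != linv (last x p))%:R).
Proof.
rewrite /wt /linred rcons_cons /= rcons_path. rewrite -rcons_cons big_rcons /=.
by case: (path _ x p); rewrite /redrel; case: (a != _) => /=; rewrite ?mul0r ?mul1r ?mulr1 ?mulr0 // mulrA.
Qed.

Lemma allwS r n : allw r n.+1 = [seq rcons w a | w <- allw r n, a <- enum (letter r)].
Proof. by []. Qed.

Lemma phi_bound (R : realType) r (y : 'I_r -> R) (x0 : letter r)
  (y0 : forall i, 0 <= y i)
  (K1 : \sum_(a : letter r) y a.1 * cf y a <= 1) n :
  \sum_(w <- allw r n.+1) wt y w * cf y (last x0 w) <= 1.
Proof.
elim: n => [|n IH].
  rewrite allwS big_allpairs_dep big_seq1 /= enumT.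
  apply: le_trans K1; rewrite le_eqVlt; apply/orP; left; apply/eqP; apply: eq_bigr => a _.
  by rewrite /wt /linred /= big_seq1 mul1r.
rewrite allwS big_allpairs_dep.
apply: le_trans IH.
rewrite big_seq [X in _ <= X]big_seq; apply: ler_sum => w.
rewrite allw_mem; case: w => [|x p] //= _.
under eq_bigr => a _ do rewrite last_rcons wt_rcons -mulrA.
rewrite -big_distrr /=.
have wt0 : 0 <= wt y (x :: p).
  rewrite /wt; apply: mulr_ge0; first by case: linred.
  by apply: prodr_ge0 => i _.
apply: ler_wpM2l => //.
set lb := linv (last x p).
have -> : \sum_(a <- enum (letter r)) (y a.1 * (a != lb)%:R * cf y a)
   = \sum_(a | a != lb) y a.1 * cf y a.
  rewrite enumT [in RHS]big_mkcond /=; apply: eq_bigr => a _.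
  by case: (a != lb); rewrite ?mulr1 ?mulr0 ?mul0r.
move: K1; rewrite (bigD1 lb) //= => K1.
have yp : 0 < 1 + y (last x p).1 by apply: ltr_pwDl => //; exact: y0.
rewrite /cf /= in K1 *.
have -> : (1 + y (last x p).1)^-1 = 1 - y (last x p).1 * (1 + y (last x p).1)^-1.
  by field; rewrite gt_eqF.
lra.
Qed.

Lemma prod_exp (R : realType) r (l : 'I_r -> R) (e s : R) (w : seq (letter r)) :
  \prod_(a <- w) expR (e - s * l a.1) = expR (e * (size w)%:R - s * wlen l w).
Proof.
rewrite /wlen; elim: w => [|a w IH]; first by rewrite !big_nil mulr0 mulr0 subr0 expR0.
rewrite !big_cons IH -expRD; congr expR; rewrite /= -addn1 natrD; ring.
Qed.

Lemma count_n_bound (R : realType) r (l : 'I_r -> R) (t e s : R) (x0 : letter r)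
  (s0 : 0 <= s)
  (y1 : forall i, expR (e - s * l i) <= 1)
  (K1 : \sum_(a : letter r) expR (e - s * l a.1) * cf (fun i => expR (e - s * l i)) a <= 1) n :
  (circ_count_n l t n.+1)%:R <= 2 * expR (s * t - n.+1%:R * e).
Proof.
set y := fun i => expR (e - s * l i).
have y0 : forall i, 0 <= y i by move=> i; exact: expR_ge0.
have Hphi := phi_bound x0 y0 K1 n.
rewrite /circ_count_n.
rewrite (@eq_card _ _ [pred w : n.+1.-tuple (letter r) | cyc_reduced w && (wlen l w <= t)]); last first.
  by move=> w; apply/idP/idP; rewrite in_setE.
rewrite -sum1_card natr_sum [X in X <= _]big_mkcond.
apply: (@le_trans _ _ (\sum_(w : n.+1.-tuple (letter r)) expR (s * t - n.+1%:R * e) * wt y w)).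
  apply: ler_sum => w _; case: ifP => Hw; last first.
    apply: mulr_ge0; first exact: expR_ge0.
    rewrite /wt; apply: mulr_ge0; first by case: linred.
    by apply: prodr_ge0 => i _.
  move: Hw; rewrite unfold_in /= => /andP[hc hl].
  rewrite /wt (cyc_lin hc) mul1r /y prod_exp size_tuple -expRD.
  apply: le_trans (expR_ge1Dx _).
  have : 0 <= s * (t - wlen l w) by apply: mulr_ge0 => //; lra.
  lra.
rewrite -big_distrr /= mulrC ler_wpM2r ?expR_ge0 //.
rewrite (@sum_tuple R r n.+1 (wt y)).
apply: (@le_trans _ _ (2 * \sum_(w <- allw r n.+1) wt y w * cf y (last x0 w))); last lra.
rewrite big_distrr /=; apply: ler_sum => w _.
have wt0 : 0 <= wt y w.
  rewrite /wt; apply: mulr_ge0; first by case: linred.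
  by apply: prodr_ge0 => i _.
have c2 : 1 <= 2 * cf y (last x0 w).
  rewrite /cf; have h1 := y1 (last x0 w).1; have h0 := y0 (last x0 w).1.
  rewrite -/(2 / (1 + y (last x0 w).1)) ler_pdivlMr; last lra.
  rewrite /y in h1 h0 *; lra.
rewrite mulrCA -[X in X <= _]mulr1.
by apply: ler_wpM2l.
Qed.

Lemma count_bound (R : realType) r (l : 'I_r -> R) (t e s : R) (x0 : letter r)
  (s0 : 0 <= s) (e0 : 0 < e)
  (y1 : forall i, expR (e - s * l i) <= 1)
  (K1 : \sum_(a : letter r) expR (e - s * l a.1) * cf (fun i => expR (e - s * l i)) a <= 1) :
  (circ_count l t)%:R <= 2 / (1 - expR (- e)) * expR (s * t).
Proof.
set rho := expR (- e).
have rho0 : 0 < rho by exact: expR_gt0.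
have rho1 : rho < 1 by rewrite /rho -expR0 ltr_expR; lra.
rewrite /circ_count natr_sum.
set N := (Num.truncn _).+2.
apply: (@le_trans _ _ (\sum_(0 <= n < N) 2 * expR (s * t) * rho ^+ n)).
  rewrite [X in _ <= X](@big_ltn _ _ _ 0 N) //.
  apply: (@le_trans _ _ (\sum_(1 <= n < N) 2 * expR (s * t) * rho ^+ n)); last first.
    rewrite -[X in X <= _]add0r lerD2r; apply: mulr_ge0; last by rewrite exprn_ge0 // ltW.
    by apply: mulr_ge0 => //; exact: expR_ge0.
  rewrite big_nat_cond [X in _ <= X]big_nat_cond; apply: ler_sum => n /andP[/andP[hn _] _].
  case: n hn => [|m] // _.
  apply: le_trans (count_n_bound t x0 s0 y1 K1 m) _.
  rewrite -mulrA ler_pM2l // /rho -expRM_natl -expRD ler_expR mulrN; lra.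
rewrite -big_distrr /=.
have := @geometric_le_lim R N 1 rho ler01 rho0.
rewrite ger0_norm ?(ltW rho0) // => /(_ rho1).
rewrite /series /geometric /= => hg.
rewrite mulrAC ler_wpM2r ?expR_ge0 // /(_ / _) ler_wpM2l //.
by move: hg; rewrite div1r; under eq_bigr do rewrite mul1r.
Qed.

Lemma gbound (R : realType) (y z x : R) : 0 <= y -> y <= z -> 0 <= x -> x <= z ->
  y / (1 + y) <= z / (1 + x).
Proof.
move=> y0 yz x0 xz.
rewrite ler_pdivrMr; last lra.
rewrite mulrAC ler_pdivlMr; last lra.
nra.
Qed.

Theorem mainTheorem15 (R : realType) (r : nat) (hr : (2 <= r)%N)
  (l : 'I_r -> R) (lpos : forall i, 0 < l i)
  (hM1 : entropy_one l)
  (hlast : forall i : 'I_r, val i = r.-1 -> ln 3 <= l i) :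
  exists i : 'I_r, (val i < r.-1)%N /\ l i <= ln (4 * r%:R - 5).
Proof.
case: r hr l lpos hM1 hlast => [|k] // hr l lpos hM1 hlast /=.
have hk : (1 <= k)%N by [].
case: (pselect (exists i : 'I_k.+1, (val i < k)%N /\ l i <= ln (4 * k.+1%:R - 5))) => // hne.
exfalso.
set A := 4 * k.+1%:R - 5 : R.
set a := ln A.
have hlt : forall i : 'I_k.+1, (val i < k)%N -> a < l i.
  move=> i hi; rewrite ltNge; apply/negP => h; apply: hne; by exists i.
have kR : 1 <= (k%:R : R) by rewrite ler1n.
have hA : A = 4 * k%:R - 1 by rewrite /A -addn1 natrD; ring.
have A3 : 3 <= A by rewrite hA; lra.
set b := ln (3 : R).
have b0 : 0 < b by apply: ln_gt0; lra.
have hba : b <= a by rewrite /b /a ler_ln ?posrE //; lra.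
set m := \big[Num.min/(a + 1)]_(i | (val i < k)%N) l i.
have hma : a < m by apply/bigmin_gtP; split; [lra | exact: hlt].
have hm1 : m <= a + 1 by exact: bigmin_le_id.
have hml : forall i : 'I_k.+1, (val i < k)%N -> m <= l i by move=> i hi; exact: bigmin_le_cond.
set x := expR (- m).
have x0 : 0 < x by exact: expR_gt0.
have hxA : x * A < 1.
  have : x < A^-1.
    have eA : expR a = A by rewrite /a lnK // posrE; lra.
    by rewrite /x -eA -expRN ltr_expR; lra.
  move=> h; rewrite -(@mulVf _ A); last by rewrite gt_eqF //; lra.
  by rewrite ltr_pM2r //; lra.
have x13 : x < 1/3 by nra.
set beta := k%:R * (2 * x / (1 + x)) + 1/2.
have hq0 : 0 <= 2 * x / (1 + x) by apply: divr_ge0; lra.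
have hbeta0 : 1/2 <= beta by rewrite /beta; have := mulr_ge0 (ler0n R k) hq0; lra.
have hbeta1 : beta < 1.
  suff : k%:R * (2 * x / (1 + x)) < 1/2 by rewrite /beta; lra.
  rewrite mulrA ltr_pdivrMr; last lra.
  rewrite hA in hxA; nra.
have a0 : 0 < a by lra.
set c := a + 2.
set eps := - ln beta / c.
have beta0 : 0 < beta by lra.
have lnb0 : ln beta < 0 by apply: ln_lt0; apply/andP; split.
have c0 : 0 < c by rewrite /c; lra.
have c2 : 2 <= c by rewrite /c; lra.
have heps0 : 0 < eps by apply: divr_gt0; lra.
set E := beta^-1.
have E0 : 0 < E by rewrite invr_gt0.
have Eb : E * beta = 1 by rewrite mulVf // gt_eqF.
have E2 : E <= 2 by nra.
have E1 : 1 <= E by nra.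
have hepsc : eps * c = - ln beta by rewrite /eps mulrAC -mulrA mulfV ?mulr1 // gt_eqF //; lra.
have hE : expR (eps * c) = E by rewrite hepsc expRN lnK // posrE.
have heps1 : eps < 1.
  have h1 : - ln beta < E.
    by rewrite -lnV ?posrE //; apply: ln_sublinear.
  rewrite /eps ltr_pdivrMr; lra.
set s := 1 - eps.
have s0 : 0 <= s by rewrite /s; lra.
set y := fun i => expR (eps - s * l i).
have y0 : forall i, 0 <= y i by move=> i; exact: expR_ge0.
have yA : forall i : 'I_k.+1, (val i < k)%N -> y i <= x * E.
  move=> i hi; have := hml i hi => hli.
  rewrite /y /x -hE -expRD ler_expR /s.
  have : (1 - eps) * (l i - m) >= 0 by apply: mulr_ge0; lra.
  have : eps * (c - 1 - m) >= 0 by apply: mulr_ge0; rewrite /c; lra.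
  lra.
have yB : forall i : 'I_k.+1, val i = k -> y i <= E / 3.
  move=> i hi; have := hlast i hi => hli.
  have e3 : expR (- b) = 3^-1 by rewrite expRN /b lnK // posrE.
  rewrite /y -hE -e3 -expRD ler_expR /s.
  have : (1 - eps) * (l i - b) >= 0 by apply: mulr_ge0; rewrite /b; lra.
  have : eps * (c - 1 - b) >= 0 by apply: mulr_ge0; rewrite /c; lra.
  lra.
have y1 : forall i, y i <= 1.
  move=> i; case: (ltnP (val i) k) => hi.
    have := yA i hi; nra.
  have hik : val i = k by apply/eqP; rewrite eqn_leq hi -ltnS ltn_ord.
  have := yB i hik; lra.
have K1 : \sum_(a : letter k.+1) y a.1 * cf y a <= 1.
  rewrite /cf -(pair_bigA _ (fun i (bb : bool) => y i * (1 + y i)^-1)) /=.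
  under eq_bigr do rewrite big_bool /=.
  rewrite big_ord_recr /=.
  apply: (@le_trans _ _ (\sum_(i < k) 2 * (x * E / (1 + x)) + 2 * (E / 3 / (1 + 1/3)))).
    apply: lerD.
      apply: ler_sum => i _.
      have := gbound (y0 (widen_ord (leqnSn k) i)) (yA (widen_ord (leqnSn k) i) (ltn_ord i)).
      move=> /(_ x (ltW x0)); rewrite -/(_ / _).
      have : x <= x * E by nra.
      move=> h /(_ h); lra.
    have := gbound (y0 ord_max) (yB ord_max erefl).
    have h3 : (0 : R) <= 1/3 by lra.
    have h4 : (1/3 : R) <= E / 3 by lra.
    move=> /(_ _ h3 h4); rewrite -/(_ / _); lra.
  rewrite sumr_const card_ord.
  set L := (X in X <= 1).
  have -> : L = E * beta by rewrite /L /beta -mulr_natl; field; lra.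
  by rewrite Eb.
have x0l : letter k.+1 := (ord0, true).
have CB := fun t => @count_bound R k.+1 l t eps s x0l s0 heps0 y1 K1.
set rho := expR (- eps) in CB.
have rho0 : 0 < rho by exact: expR_gt0.
have rho1 : rho < 1 by rewrite /rho -expR0 ltr_expR; lra.
set C := 2 / (1 - rho) in CB.
have C2 : 2 <= C by rewrite /C ler_pdivlMr; lra.
have lnC0 : 0 <= ln C by apply: ln_ge0; lra.
have hz : (1 + s) / 2 < 1 by rewrite /s; lra.
have H : \forall t \near +oo, (1 + s) / 2 < ln (circ_count l t)%:R / t.
  exact: (@cvgr_gt R R _ (@proper_pinfty_nbhs R) _ 1 hM1 _ hz).
have [t ht /= ft] := pinfty_ex_gt (num_real (2 * ln C / eps + 1)) H.
have hT : 2 * ln C < t * eps.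
  have : 2 * ln C / eps < t by lra.
  by rewrite ltr_pdivrMr.
have t0 : 0 < t.
  have : 0 <= 2 * ln C / eps by apply: divr_ge0; lra.
  lra.
have lnc : ln (circ_count l t)%:R <= ln C + s * t.
  case: (posnP (circ_count l t)) => hc.
    rewrite hc ln0 //; have : 0 <= s * t by apply: mulr_ge0; lra.
    lra.
  have cpos : (0 : R) < (circ_count l t)%:R by rewrite ltr0n.
  apply: le_trans (_ : ln (C * expR (s * t)) <= _).
    rewrite ler_ln ?posrE //.
    by apply: mulr_gt0; [lra | exact: expR_gt0].
  by rewrite lnM ?posrE ?expRK //; [lra | exact: expR_gt0].
move: ft; rewrite ltr_pdivlMr // => ft.
have e1 : (1 + s) / 2 * t = t - (t * eps) / 2 by rewrite /s; field.
have e2 : s * t = t - t * eps by rewrite /s; ring.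
rewrite e1 in ft; rewrite e2 in lnc.
move: ft lnc hT; set u := t * eps; set v := ln _; set w := ln C; lra.
Qed.
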